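(* Let $(b,c)$ be a connected canonically compactifiable weighted graph over $X$. If $f\in\mathcal A$ satisfies $\mathcal L f=0$ on $X$, then $\|f\|_\infty=\|\hat f|_{\partial X}\|_\infty$.
   Context: Let $X$ be a countably infinite set. A weighted graph $(b,c)$ over $X$ consists of a symmetric $b:X\times X\to[0,\infty)$ with $b(x,x)=0$ and $\sum_{y}b(x,y)<\infty$ for all $x$, and $c:X\to[0,\infty)$; connected means any two distinct vertices are joined by a finite path of pairwise distinct vertices with consecutive ones satisfying $b>0$. The formal Laplacian acts on bounded $f$ by $\mathcal Lf(x)=\sum_y b(x,y)(f(x)-f(y))+c(x)f(x)$. Let $\widetilde Q(f)=\frac12\sum_{x,y}b(x,y)|f(x)-f(y)|^2+\sum_x c(x)|f(x)|^2$ and $\widetilde D=\{f:\widetilde Q(f)<\infty\}$; the graph is canonically compactifiable if $\widetilde D\subseteq\ell^\infty(X)$. Then $\mathcal A$ is the sup-norm closure of $\widetilde D$ in $\ell^\infty(X)$, $\mathcal A^+$ the smallest $C^*$-subalgebra of $\ell^\infty(X)$ containing $\mathcal A$ and $1$, $K$ the set of characters (nonzero multiplicative linear functionals) of $\mathcal A^+$ with the weak-$*$ topology, $\hat g(\gamma)=\gamma(g)$ for $g\in\mathcal A^+$, $\gamma\in K$. Via $x\mapsto\delta_x$ ($\delta_x(f)=f(x)$) we view $X\subseteq K$ and set $\partial X=K\setminus X$. *)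

(* Defs.v *)
From Stdlib Require Import Reals.
Open Scope R_scope.

Definition Cx : Type := (R * R)%type.
Definition Cre (z : Cx) : R := fst z.
Definition Cim (z : Cx) : R := snd z.
Definition Cof (r : R) : Cx := (r, 0).
Definition C0 : Cx := (0, 0).
Definition C1 : Cx := (1, 0).
Definition Cadd (z w : Cx) : Cx := (fst z + fst w, snd z + snd w).
Definition Csub (z w : Cx) : Cx := (fst z - fst w, snd z - snd w).
Definition Cmul (z w : Cx) : Cx :=
  (fst z * fst w - snd z * snd w, fst z * snd w + snd z * fst w).
Definition Cconj (z : Cx) : Cx := (fst z, - snd z).
Definition Cmod (z : Cx) : R := sqrt (fst z ^ 2 + snd z ^ 2).

Section Graphs.
Context {X : Type}.
Variable e : nat -> X.   (* a fixed bijection nat -> X *)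

Definition enumeration : Prop :=
  (forall n m, e n = e m -> n = m) /\ (forall x, exists n, e n = x).

Definition weighted_graph (b : X -> X -> R) (c : X -> R) : Prop :=
  (forall x y, 0 <= b x y) /\ (forall x y, b x y = b y x) /\
  (forall x, b x x = 0) /\
  (forall x, exists l, infinite_sum (fun n => b x (e n)) l) /\
  (forall x, 0 <= c x).

Definition connected (b : X -> X -> R) : Prop :=
  forall x y, x <> y ->
    exists (n : nat) (p : nat -> X),
      p 0%nat = x /\ p n = y /\
      (forall i j, (i <= n)%nat -> (j <= n)%nat -> p i = p j -> i = j) /\
      (forall i, (i < n)%nat -> 0 < b (p i) (p (S i))).

(** Q~(f) < infinity (all terms are nonnegative, so finiteness means
    bounded partial sums, independent of the enumeration) *)
Definition Qfinite (b : X -> X -> R) (c : X -> R) (f : X -> Cx) : Prop :=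
  exists M, forall N,
    / 2 * sum_f_R0 (fun n => sum_f_R0 (fun m =>
             b (e n) (e m) * (Cmod (Csub (f (e n)) (f (e m)))) ^ 2) N) N
    + sum_f_R0 (fun n => c (e n) * (Cmod (f (e n))) ^ 2) N <= M.

Definition bounded (f : X -> Cx) : Prop := exists M, forall x, Cmod (f x) <= M.

Definition canonically_compactifiable (b : X -> X -> R) (c : X -> R) : Prop :=
  forall f, Qfinite b c f -> bounded f.

Definition sup_closed (S : (X -> Cx) -> Prop) : Prop :=
  forall f, bounded f ->
    (forall eps, 0 < eps -> exists g, S g /\ forall x, Cmod (Csub (f x) (g x)) <= eps) ->
    S f.

Definition in_A (b : X -> X -> R) (c : X -> R) (f : X -> Cx) : Prop :=
  bounded f /\
  forall eps, 0 < eps -> exists g, Qfinite b c g /\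
    forall x, Cmod (Csub (f x) (g x)) <= eps.

Definition Cstar_subalgebra (S : (X -> Cx) -> Prop) : Prop :=
  (forall f, S f -> bounded f) /\
  (forall f g, S f -> S g -> S (fun x => Cadd (f x) (g x))) /\
  (forall (a : Cx) f, S f -> S (fun x => Cmul a (f x))) /\
  (forall f g, S f -> S g -> S (fun x => Cmul (f x) (g x))) /\
  (forall f, S f -> S (fun x => Cconj (f x))) /\
  sup_closed S.

Definition in_Aplus (b : X -> X -> R) (c : X -> R) (f : X -> Cx) : Prop :=
  forall S, Cstar_subalgebra S -> (forall g, in_A b c g -> S g) ->
    S (fun _ => C1) -> S f.

(** characters of A^+ (only their values on A^+ are relevant) *)
Definition character (b : X -> X -> R) (c : X -> R) (gam : (X -> Cx) -> Cx) : Prop :=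
  (forall f g, in_Aplus b c f -> in_Aplus b c g ->
     gam (fun x => Cadd (f x) (g x)) = Cadd (gam f) (gam g)) /\
  (forall (a : Cx) f, in_Aplus b c f -> gam (fun x => Cmul a (f x)) = Cmul a (gam f)) /\
  (forall f g, in_Aplus b c f -> in_Aplus b c g ->
     gam (fun x => Cmul (f x) (g x)) = Cmul (gam f) (gam g)) /\
  (exists f, in_Aplus b c f /\ gam f <> C0).

Definition point_evaluation (b : X -> X -> R) (c : X -> R) (gam : (X -> Cx) -> Cx) : Prop :=
  exists x, forall f, in_Aplus b c f -> gam f = f x.

(** gam in the boundary dX = K \ X *)
Definition in_boundary (b : X -> X -> R) (c : X -> R) (gam : (X -> Cx) -> Cx) : Prop :=
  character b c gam /\ ~ point_evaluation b c gam.

(** L f (x) = 0, i.e. sum_y b(x,y)(f x - f y) + c x f x = 0 (series summed along e;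
    it converges absolutely for bounded f) *)
Definition harmonic_at (b : X -> X -> R) (c : X -> R) (f : X -> Cx) (x : X) : Prop :=
  infinite_sum (fun n => b x (e n) * (Cre (f x) - Cre (f (e n)))) (- (c x * Cre (f x))) /\
  infinite_sum (fun n => b x (e n) * (Cim (f x) - Cim (f (e n)))) (- (c x * Cim (f x))).

End Graphs.

(* Main.v *)
From Pilot Require Import Defs.
From Stdlib Require Import Reals.
From Stdlib Require Import Lra Psatz Classical ClassicalEpsilon FunctionalExtensionality Arith.
From mathcomp Require ssreflect boolp classical_sets filter.
Open Scope R_scope.
Notation CC1 := Pilot.Defs.C1.
Notation CC0 := Pilot.Defs.C0.
Notation bounded := Pilot.Defs.bounded.

Lemma Cmod_ge0 z : 0 <= Cmod z.
Proof. unfold Cmod; apply sqrt_pos. Qed.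

Lemma Cmod_sq z : Cmod z * Cmod z = fst z ^ 2 + snd z ^ 2.
Proof. unfold Cmod; apply sqrt_sqrt; nra. Qed.

Lemma Cmod_pow2 z : Cmod z ^ 2 = fst z ^ 2 + snd z ^ 2.
Proof. rewrite <- Cmod_sq; ring. Qed.

Lemma Cmod_fst z : Rabs (fst z) <= Cmod z.
Proof.
  unfold Cmod. rewrite <- sqrt_Rsqr_abs. apply sqrt_le_1_alt. unfold Rsqr. nra.
Qed.

Lemma Cmod_snd z : Rabs (snd z) <= Cmod z.
Proof.
  unfold Cmod. rewrite <- sqrt_Rsqr_abs. apply sqrt_le_1_alt. unfold Rsqr. nra.
Qed.

Lemma Cmod_real a b : b = 0 -> Cmod (a, b) = Rabs a.
Proof.
  intros ->. unfold Cmod. simpl. rewrite <- sqrt_Rsqr_abs. f_equal. unfold Rsqr. ring.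
Qed.

Lemma dot_le a b c d : a * c + b * d <= Cmod (a, b) * Cmod (c, d).
Proof.
  unfold Cmod; simpl. rewrite <- sqrt_mult by nra.
  apply Rle_trans with (Rabs (a*c+b*d)). apply Rle_abs.
  rewrite <- sqrt_Rsqr_abs. apply sqrt_le_1_alt. unfold Rsqr.
  pose proof (pow2_ge_0 (a*d-b*c)). nra.
Qed.

Lemma Cmod_triangle z w : Cmod (Cadd z w) <= Cmod z + Cmod w.
Proof.
  destruct z as [a b]; destruct w as [c d].
  pose proof (dot_le a b c d) as H.
  pose proof (Cmod_sq (Cadd (a,b) (c,d))) as H1. simpl in H1.
  pose proof (Cmod_sq (a,b)) as H2. pose proof (Cmod_sq (c,d)) as H3. simpl in H2, H3.
  pose proof (Cmod_ge0 (Cadd (a,b) (c,d))). pose proof (Cmod_ge0 (a,b)). pose proof (Cmod_ge0 (c,d)).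
  nra.
Qed.

Lemma Cmod_le_sub z w : Cmod z <= Cmod (Csub z w) + Cmod w.
Proof.
  replace z with (Cadd (Csub z w) w) at 1.
  apply Cmod_triangle.
  destruct z, w; unfold Cadd, Csub; simpl; f_equal; ring.
Qed.

Lemma Cmod_le_parts z : Cmod z <= Rabs (fst z) + Rabs (snd z).
Proof.
  pose proof (Cmod_sq z). pose proof (Cmod_ge0 z).
  pose proof (Rabs_pos (fst z)). pose proof (Rabs_pos (snd z)).
  pose proof (pow2_abs (fst z)). pose proof (pow2_abs (snd z)).
  nra.
Qed.

Lemma Cmod_mul a z : Cmod (Cmul a z) = Cmod a * Cmod z.
Proof.
  unfold Cmod, Cmul; simpl. rewrite <- sqrt_mult by nra. f_equal. ring.
Qed.

Lemma Cmod_conj z : Cmod (Cconj z) = Cmod z.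
Proof. unfold Cmod, Cconj; simpl. f_equal. ring. Qed.

Lemma Cmod_C1 : Cmod CC1 = 1.
Proof. unfold CC1. rewrite Cmod_real by reflexivity. apply Rabs_R1. Qed.

Lemma Cmod_C0 : Cmod CC0 = 0.
Proof. unfold CC0. rewrite Cmod_real by reflexivity. apply Rabs_R0. Qed.

Lemma Cmul_cancel u w : Cmul u w = w -> w <> CC0 -> u = CC1.
Proof.
  destruct u as [u1 u2], w as [a b]; unfold Cmul, CC1, CC0; simpl; intros H Hw.
  injection H; intros H2 H1.
  assert (Hs : a*a + b*b <> 0).
  { intro Hz. apply Hw. assert (a = 0) by (apply Rsqr_0_uniq; unfold Rsqr; nra). assert (b = 0) by (apply Rsqr_0_uniq; unfold Rsqr; nra). subst; reflexivity. }
  assert (E1 : (u1 - 1) * (a*a+b*b) = 0).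
  { replace ((u1 - 1) * (a*a+b*b)) with ((u1*a-u2*b-a)*a + (u1*b+u2*a-b)*b) by ring.
    rewrite H1, H2; ring. }
  assert (E2 : u2 * (a*a+b*b) = 0).
  { replace (u2 * (a*a+b*b)) with ((u1*b+u2*a-b)*a - (u1*a-u2*b-a)*b) by ring.
    rewrite H1, H2; ring. }
  apply Rmult_integral in E1; apply Rmult_integral in E2.
  destruct E1 as [E1|E1]; [|contradiction]. destruct E2 as [E2|E2]; [|contradiction].
  f_equal; lra.
Qed.

Lemma Cmod_sub_le z w : Cmod (Csub z w) <= Cmod z + Cmod w.
Proof.
  replace (Csub z w) with (Cadd z (Cmul (-1,0) w)).
  - eapply Rle_trans. apply Cmod_triangle. rewrite Cmod_mul.
    rewrite Cmod_real by reflexivity. assert (Ha : Rabs (-1) = 1) by (rewrite Rabs_left; lra). rewrite Ha. lra.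
  - destruct z, w; unfold Cadd, Cmul, Csub; simpl; f_equal; ring.
Qed.

Lemma sum_ge_term (t : nat -> R) k N : (forall n, 0 <= t n) -> (k <= N)%nat -> t k <= sum_f_R0 t N.
Proof.
  intros Ht Hk. induction N.
  - assert (k = 0%nat) by lia. subst. simpl. lra.
  - destruct (Nat.eq_dec k (S N)) as [->|Hne].
    + simpl. pose proof (cond_pos_sum t N Ht). lra.
    + simpl. specialize (IHN ltac:(lia)). pose proof (Ht (S N)). lra.
Qed.

Lemma sum_mono (t : nat -> R) N M : (forall n, 0 <= t n) -> (N <= M)%nat -> sum_f_R0 t N <= sum_f_R0 t M.
Proof.
  intros Ht H. induction H. lra. simpl. pose proof (Ht (S m)). lra.
Qed.

Lemma partial_le_lim (t : nat -> R) l N : infinite_sum t l -> (forall n, 0 <= t n) -> sum_f_R0 t N <= l.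
Proof.
  intros Hs Ht. destruct (Rle_dec (sum_f_R0 t N) l) as [|Hn]; auto.
  exfalso. destruct (Hs (sum_f_R0 t N - l)) as [N' HN']. lra.
  specialize (HN' (max N N') ltac:(lia)).
  pose proof (sum_mono t N (max N N') Ht ltac:(lia)).
  unfold Rdist in HN'. apply Rabs_def2 in HN'. lra.
Qed.

Lemma term_le_lim (t : nat -> R) l k : infinite_sum t l -> (forall n, 0 <= t n) -> t k <= l.
Proof.
  intros Hs Ht. eapply Rle_trans. apply (sum_ge_term t k k Ht); lia.
  apply partial_le_lim; auto.
Qed.

Lemma Un_cv_ext u v l : (forall n, u n = v n) -> Un_cv u l -> Un_cv v l.
Proof.
  intros He H eps Heps. destruct (H eps Heps) as [N HN]. exists N; intros n Hn.
  rewrite <- He. auto.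
Qed.

Lemma Un_cv_const p : Un_cv (fun _ => p) p.
Proof. intros eps Heps. exists 0%nat. intros. unfold Rdist. rewrite Rminus_diag, Rabs_R0. lra. Qed.

Lemma infinite_sum_lin u v U V p q :
  infinite_sum u U -> infinite_sum v V ->
  infinite_sum (fun n => p * u n + q * v n) (p * U + q * V).
Proof.
  intros Hu Hv. unfold infinite_sum.
  change (Un_cv (sum_f_R0 (fun n => p * u n + q * v n)) (p * U + q * V)).
  apply Un_cv_ext with (fun N => p * sum_f_R0 u N + q * sum_f_R0 v N).
  { intro N. rewrite sum_plus. rewrite !scal_sum. f_equal; apply sum_eq; intros; ring. }
  apply CV_plus; apply CV_mult; auto using Un_cv_const.
Qed.

Lemma infinite_sum_ext u v l l' : (forall n, u n = v n) -> l = l' -> infinite_sum u l -> infinite_sum v l'.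
Proof.
  intros He <- H. unfold infinite_sum in *.
  change (Un_cv (sum_f_R0 v) l). apply Un_cv_ext with (sum_f_R0 u); auto.
  intro N; apply sum_eq; auto.
Qed.

Lemma nbr {X : Type} (e : nat -> X) b c f x y :
  enumeration e -> weighted_graph e b c -> harmonic_at e b c f x ->
  (forall z, Cmod (f z) <= Cmod (f x)) -> 0 < b x y -> f y = f x.
Proof.
  intros [Hinj Hsurj] (Hb0 & Hsym & Hdiag & Hsum & Hc0) [H1 H2] Hmax Hbxy.
  destruct (Hsurj y) as [k <-]. unfold Cre, Cim in *.
  set (a := fst (f x)) in *. set (be := snd (f x)) in *.
  pose proof (infinite_sum_lin _ _ _ _ a be H1 H2) as Hl.
  set (t := fun n => b x (e n) * (a*(a - fst (f (e n))) + be*(be - snd (f (e n))))).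
  assert (Ht : infinite_sum t (- c x * (a^2 + be^2))).
  { eapply infinite_sum_ext; [| |exact Hl]. intro n; unfold t; ring. ring. }
  assert (Hsq : Cmod (f x) * Cmod (f x) = a^2 + be^2) by (rewrite Cmod_sq; reflexivity).
  assert (Hnn : forall n, 0 <= t n).
  { intro n. unfold t. apply Rmult_le_pos; auto.
    pose proof (dot_le a be (fst (f (e n))) (snd (f (e n)))) as D.
    rewrite <- !surjective_pairing in D. fold a be in D.
    replace (a, be) with (f x) in D by (unfold a, be; apply surjective_pairing).
    pose proof (Hmax (e n)). pose proof (Cmod_ge0 (f (e n))).
    pose proof (Cmod_ge0 (f x)). nra. }
  pose proof (term_le_lim t _ k Ht Hnn) as Hk. unfold t in Hk.
  pose proof (Hc0 x).
  assert (Hk2 : a*(a - fst (f (e k))) + be*(be - snd (f (e k))) <= 0).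
  { assert (0 <= c x * (a^2+be^2)) by (apply Rmult_le_pos; nra).
    destruct (Rle_dec (a*(a - fst (f (e k))) + be*(be - snd (f (e k)))) 0); auto.
    exfalso. assert (0 < b x (e k) * (a*(a - fst (f (e k))) + be*(be - snd (f (e k))))).
    apply Rmult_lt_0_compat; lra. lra. }
  assert (Hy : fst (f (e k)) ^2 + snd (f (e k)) ^2 <= a^2 + be^2).
  { pose proof (Cmod_sq (f (e k))). pose proof (Hmax (e k)). pose proof (Cmod_ge0 (f (e k))). pose proof (Cmod_ge0 (f x)). nra. }

  assert (E : (a - fst (f (e k)))^2 + (be - snd (f (e k)))^2 <= 0).
  { replace ((a - fst (f (e k)))^2 + (be - snd (f (e k)))^2) with
      (2*(a*(a - fst (f (e k))) + be*(be - snd (f (e k)))) - (a^2+be^2) + (fst (f (e k)) ^2 + snd (f (e k)) ^2)) by ring.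
    lra. }
  pose proof (pow2_ge_0 (a - fst (f (e k)))). pose proof (pow2_ge_0 (be - snd (f (e k)))).
  assert (Ea : fst (f (e k)) = a).
  { apply Rminus_diag_uniq_sym. destruct (Req_dec (a - fst (f (e k))) 0) as [Z|Z]; [exact Z|]. exfalso; apply (pow_nonzero _ 2) in Z; lra. }
  assert (Eb : snd (f (e k)) = be).
  { apply Rminus_diag_uniq_sym. destruct (Req_dec (be - snd (f (e k))) 0) as [Z|Z]; [exact Z|]. exfalso; apply (pow_nonzero _ 2) in Z; lra. }
  rewrite (surjective_pairing (f (e k))), (surjective_pairing (f x)). rewrite Ea, Eb. reflexivity.
Qed.

Lemma const_conn {X : Type} (e : nat -> X) b c f x0 :
  enumeration e -> weighted_graph e b c -> connected b ->
  (forall x, harmonic_at e b c f x) ->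
  (forall z, Cmod (f z) <= Cmod (f x0)) -> forall x, f x = f x0.
Proof.
  intros He Hg Hc Hh Hm x.
  destruct (classic (x = x0)) as [->|Hne]; auto.
  destruct (Hc x0 x (fun E => Hne (eq_sym E))) as (n & p & Hp0 & Hpn & _ & Hpb).
  assert (forall i, (i <= n)%nat -> f (p i) = f x0).
  { induction i; intros Hi. rewrite Hp0; auto.
    rewrite (nbr e b c f (p i) (p (S i)) He Hg (Hh _)).
    - apply IHi; lia.
    - intro z. rewrite IHi by lia. auto.
    - apply Hpb; lia. }
  rewrite <- Hpn. auto.
Qed.

Lemma div_nonneg a d : 0 <= a -> 0 < d -> 0 <= a / d.
Proof. intros. unfold Rdiv. apply Rmult_le_pos; auto. left; apply Rinv_0_lt_compat; auto. Qed.

Section Aplus.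
Context {X : Type} (e : nat -> X) (b : X -> X -> R) (c : X -> R).

Lemma Aplus_A g : in_A e b c g -> in_Aplus e b c g.
Proof. intros Hg S HS HA H1. apply HA; auto. Qed.

Lemma Aplus_one : in_Aplus e b c (fun _ => CC1).
Proof. intros S HS HA H1. auto. Qed.

Lemma Aplus_add g h : in_Aplus e b c g -> in_Aplus e b c h -> in_Aplus e b c (fun x => Cadd (g x) (h x)).
Proof. intros Hg Hh S HS HA H1. pose proof HS as (_ & Hadd & _). apply Hadd; [apply Hg|apply Hh]; auto. Qed.

Lemma Aplus_scal a g : in_Aplus e b c g -> in_Aplus e b c (fun x => Cmul a (g x)).
Proof. intros Hg S HS HA H1. pose proof HS as (_ & _ & Hsc & _). apply Hsc; apply Hg; auto. Qed.

Lemma Aplus_mul g h : in_Aplus e b c g -> in_Aplus e b c h -> in_Aplus e b c (fun x => Cmul (g x) (h x)).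
Proof. intros Hg Hh S HS HA H1. pose proof HS as (_ & _ & _ & Hm & _). apply Hm; [apply Hg|apply Hh]; auto. Qed.

Lemma Aplus_conj g : in_Aplus e b c g -> in_Aplus e b c (fun x => Cconj (g x)).
Proof. intros Hg S HS HA H1. pose proof HS as (_ & _ & _ & _ & Hc & _). apply Hc; apply Hg; auto. Qed.

Lemma Aplus_ext g h : (forall x, g x = h x) -> in_Aplus e b c g -> in_Aplus e b c h.
Proof. intros E Hg. replace h with g; auto. apply functional_extensionality; auto. Qed.

Lemma Aplus_closed g : bounded g ->
  (forall eps, 0 < eps -> exists h, in_Aplus e b c h /\ forall x, Cmod (Csub (g x) (h x)) <= eps) ->
  in_Aplus e b c g.
Proof.
  intros Hb Hap S HS HA H1. pose proof HS as (_ & _ & _ & _ & _ & Hcl).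
  apply Hcl; auto. intros eps Heps. destruct (Hap eps Heps) as (h & Hh & Hd).
  exists h; split; auto. apply Hh; auto.
Qed.

Lemma bounded_cstar : Cstar_subalgebra (@Pilot.Defs.bounded X).
Proof.
  repeat split; auto.
  - intros f g [M1 H1] [M2 H2]. exists (M1 + M2). intro x.
    eapply Rle_trans. apply Cmod_triangle. pose proof (H1 x); pose proof (H2 x); lra.
  - intros a f [M H]. exists (Cmod a * M). intro x. rewrite Cmod_mul.
    apply Rmult_le_compat_l. apply Cmod_ge0. auto.
  - intros f g [M1 H1] [M2 H2]. exists (Rabs M1 * Rabs M2). intro x. rewrite Cmod_mul.
    apply Rmult_le_compat; auto using Cmod_ge0.
    eapply Rle_trans; [apply H1|apply Rle_abs].
    eapply Rle_trans; [apply H2|apply Rle_abs].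
  - intros f [M H]. exists M. intro x. rewrite Cmod_conj. auto.
  - intros f Hf _. auto.
Qed.

Lemma Aplus_bounded g : in_Aplus e b c g -> bounded g.
Proof.
  intros Hg. apply Hg. apply bounded_cstar. intros h [Hh _]; auto.
  exists 1. intro. rewrite Cmod_C1. lra.
Qed.

(* Neumann series: inverse of a real function bounded away from 0 *)
Lemma Aplus_inv_real (k : X -> R) d K :
  in_Aplus e b c (fun x => (k x, 0)) -> 0 < d -> (forall x, d <= k x <= K) ->
  in_Aplus e b c (fun x => (1 / k x, 0)).
Proof.
  intros Hk Hd HdK.
  destruct (classic (exists x0 : X, True)) as [[x0 _]|Hemp].
  2:{ apply (Aplus_ext (fun _ => CC1)). intro x. exfalso. apply Hemp. exists x; auto. apply Aplus_one. }
  assert (HK : 0 < K) by (destruct (HdK x0); lra).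
  assert (HdK' : d <= K) by (destruct (HdK x0); lra).
  set (q := fun x => 1 - k x / K).
  set (rho := 1 - d / K).
  assert (Hq : forall x, 0 <= q x <= rho).
  { intro x. unfold q, rho. destruct (HdK x). split.
    - assert (k x / K <= 1). { apply Rmult_le_reg_r with K; auto. unfold Rdiv; rewrite Rmult_assoc, Rinv_l; lra. } lra.
    - assert (d / K <= k x / K). { unfold Rdiv. apply Rmult_le_compat_r; auto. left; apply Rinv_0_lt_compat; auto. } lra. }
  assert (Hrho : 0 <= rho < 1).
  { unfold rho. assert (0 < d / K) by (apply Rdiv_lt_0_compat; auto).
    assert (d / K <= 1). { apply Rmult_le_reg_r with K; auto. unfold Rdiv; rewrite Rmult_assoc, Rinv_l; lra. } lra. }
  assert (Hqf : in_Aplus e b c (fun x => (q x, 0))).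
  { apply (Aplus_ext (fun x => Cadd CC1 (Cmul (- / K, 0) (k x, 0)))).
    - intro x. unfold Cadd, Cmul, CC1, q; simpl. f_equal; unfold Rdiv; ring.
    - apply Aplus_add. apply Aplus_one. apply Aplus_scal. auto. }
  assert (Hpow : forall n, in_Aplus e b c (fun x => (q x ^ n, 0))).
  { induction n.
    - apply (Aplus_ext (fun _ => CC1)). intro; reflexivity. apply Aplus_one.
    - apply (Aplus_ext (fun x => Cmul (q x, 0) (q x ^ n, 0))).
      + intro x. unfold Cmul; simpl. f_equal; ring.
      + apply Aplus_mul; auto. }
  assert (Hsum : forall N, in_Aplus e b c (fun x => (sum_f_R0 (fun n => q x ^ n) N, 0))).
  { induction N.
    - simpl. apply (Aplus_ext (fun x => (q x ^ 0, 0))). intro; reflexivity. apply Hpow.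
    - apply (Aplus_ext (fun x => Cadd (sum_f_R0 (fun n => q x ^ n) N, 0) (q x ^ S N, 0))).
      + intro x. unfold Cadd; simpl. f_equal; ring.
      + apply Aplus_add; auto. }
  assert (Hlim : in_Aplus e b c (fun x => (K / k x, 0))).
  { apply Aplus_closed.
    - exists (K / d). intro x. rewrite Cmod_real by reflexivity. destruct (HdK x).
      rewrite Rabs_right.
      + unfold Rdiv. apply Rmult_le_compat_l; lra || (apply Rinv_le_contravar; lra).
      + apply Rle_ge; apply div_nonneg; lra.
    - intros eps Heps.
      destruct (pow_lt_1_zero rho ltac:(rewrite Rabs_right; lra) (eps * d / K)) as [N HN].
      { apply Rdiv_lt_0_compat; auto. apply Rmult_lt_0_compat; auto. }
      exists (fun x => (sum_f_R0 (fun n => q x ^ n) N, 0)). split; auto.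
      intro x. unfold Csub; simpl. rewrite Cmod_real by ring.
      destruct (HdK x) as [Hdk HkK]. assert (Hkx : 0 < k x) by lra.
      pose proof (GP_finite (q x) N) as G.
      assert (Hq1 : q x - 1 = - (k x / K)) by (unfold q; ring).
      rewrite Hq1 in G.
      assert (Es : sum_f_R0 (fun n => q x ^ n) N = (1 - q x ^ (N+1)) * K / k x).
      { apply Rmult_eq_reg_r with (- (k x / K)).
        rewrite G. field. lra. intro Z. assert (k x / K > 0) by (apply Rdiv_lt_0_compat; auto). lra. }
      rewrite Es.
      replace (K / k x - (1 - q x ^ (N + 1)) * K / k x) with (q x ^ (N+1) * (K / k x)) by (field; lra).
      specialize (HN (N+1)%nat ltac:(lia)). rewrite Rabs_right in HN.
      2:{ apply Rle_ge, pow_le; lra. }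
      pose proof (pow_incr (q x) rho (N+1) (Hq x)) as Hqr.
      assert (0 <= q x ^ (N+1)) by (apply pow_le; apply Hq).
      rewrite Rabs_right.
      2:{ apply Rle_ge. apply Rmult_le_pos; auto. apply div_nonneg; lra. }
      assert (K / k x <= K / d).
      { unfold Rdiv. apply Rmult_le_compat_l; [lra|]. apply Rinv_le_contravar; lra. }
      assert (Hk0 : 0 <= K / k x) by (apply div_nonneg; lra).
      apply Rle_trans with (rho ^ (N+1) * (K / d)).
      + apply Rmult_le_compat; auto.
      + apply Rle_trans with (eps * d / K * (K / d)).
        * apply Rmult_le_compat_r. apply div_nonneg; lra. lra.
        * right. field. split; lra. }
  apply (Aplus_ext (fun x => Cmul (/ K, 0) (K / k x, 0))).
  - intro x. unfold Cmul; simpl. destruct (HdK x). f_equal; field; lra.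
  - apply Aplus_scal; auto.
Qed.

End Aplus.

Section Char.
Context {X : Type} (e : nat -> X) (b : X -> X -> R) (c : X -> R).

Lemma char_one gam : character e b c gam -> gam (fun _ => CC1) = CC1.
Proof.
  intros (Hadd & Hsc & Hmul & h & Hh & Hne).
  pose proof (Hmul (fun _ => CC1) h (Aplus_one e b c) Hh) as E. cbv beta in E.
  replace (fun x => Cmul CC1 (h x)) with h in E.
  - apply (Cmul_cancel _ (gam h)); auto.
  - apply functional_extensionality. intro x. unfold Cmul, CC1. destruct (h x); simpl. f_equal; ring.
Qed.

Lemma char_bound gam g m : character e b c gam -> in_Aplus e b c g ->
  (forall x, Cmod (g x) <= m) -> Cmod (gam g) <= m.
Proof.
  intros Hch Hg Hm. pose proof (char_one gam Hch) as H1.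
  destruct Hch as (Hadd & Hsc & Hmul & _).
  destruct (Rle_dec (Cmod (gam g)) m) as [|Hlt]; auto. exfalso. apply Rnot_le_lt in Hlt.
  set (lam := gam g) in *.
  set (hf := fun x => Cadd (Cmul lam CC1) (Cmul (-1,0) (g x))).
  assert (Hc1 : in_Aplus e b c (fun _ : X => Cmul lam CC1)) by (apply Aplus_scal, Aplus_one).
  assert (Hc2 : in_Aplus e b c (fun x => Cmul (-1,0) (g x))) by (apply Aplus_scal; auto).
  assert (Hhf : in_Aplus e b c hf) by (apply (Aplus_add e b c _ _ Hc1 Hc2)).
  assert (Ghf : gam hf = CC0).
  { pose proof (Hadd _ _ Hc1 Hc2) as E. cbv beta in E. unfold hf. rewrite E.
    rewrite (Hsc lam (fun _ => CC1) (Aplus_one e b c)). rewrite (Hsc (-1,0) g Hg). rewrite H1.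
    fold lam. unfold Cadd, Cmul, CC1, CC0. destruct lam; simpl. f_equal; ring. }
  assert (Ehf : forall x, hf x = Csub lam (g x)).
  { intro x. unfold hf, Cadd, Cmul, Csub, CC1. destruct lam, (g x); simpl. f_equal; ring. }
  set (k := fun x => fst (hf x) ^ 2 + snd (hf x) ^ 2).
  set (D := Cmod lam - m).
  assert (HD : 0 < D) by (unfold D; lra).
  assert (Hkb : forall x, D^2 <= k x <= (Cmod lam + Rabs m)^2).
  { intro x. unfold k. rewrite <- Cmod_pow2. rewrite Ehf.
    pose proof (Cmod_le_sub lam (g x)). pose proof (Hm x).
    pose proof (Cmod_ge0 (Csub lam (g x))). pose proof (Cmod_sub_le lam (g x)).
    pose proof (Rle_abs m). pose proof (Cmod_ge0 (g x)).
    set (t := Cmod (Csub lam (g x))) in *. set (L := Cmod lam) in *.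
    assert (D <= t) by (unfold D; lra).
    assert (t <= L + Rabs m) by lra.
    split; simpl; rewrite !Rmult_1_r; apply Rmult_le_compat; lra. }
  assert (Hk : in_Aplus e b c (fun x => (k x, 0))).
  { apply (Aplus_ext e b c (fun x => Cmul (hf x) (Cconj (hf x)))).
    - intro x. unfold k, Cmul, Cconj. destruct (hf x); simpl. f_equal; ring.
    - apply Aplus_mul; auto. apply Aplus_conj; auto. }
  assert (Hw : in_Aplus e b c (fun x => (1 / k x, 0))).
  { apply (Aplus_inv_real e b c k (D^2) ((Cmod lam + Rabs m)^2)); auto. nra. }
  set (hinv := fun x => Cmul (Cconj (hf x)) (1 / k x, 0)).
  assert (Hinv : in_Aplus e b c hinv).
  { apply (Aplus_mul e b c (fun x => Cconj (hf x)) (fun x => (1 / k x, 0))); auto. apply Aplus_conj; auto. }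
  pose proof (Hmul hf hinv Hhf Hinv) as E. rewrite Ghf in E.
  replace (fun x => Cmul (hf x) (hinv x)) with (fun _ : X => CC1) in E.
  - rewrite H1 in E. unfold Cmul, CC1, CC0 in E. destruct (gam hinv); simpl in E.
    injection E. intros. lra.
  - apply functional_extensionality. intro x. unfold hinv.
    assert (Hkx : k x <> 0) by (pose proof (Hkb x); nra).
    unfold k in *. unfold Cmul, Cconj, CC1. destruct (hf x) as [p q]; simpl in *.
    f_equal; field; intro Z; apply Hkx; nra.
Qed.

End Char.

Section UL.
Context {X : Type} (U : (X -> Prop) -> Prop)
  (UT : U (fun _ => True))
  (UI : forall A B, U A -> U B -> U (fun x => A x /\ B x))
  (US : forall A B : X -> Prop, (forall x, A x -> B x) -> U A -> U B)
  (UP : forall A, U A -> exists x, A x)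
  (UU : forall A, U A \/ U (fun x => ~ A x)).

Definition isLim (h : X -> R) L := forall eps, 0 < eps -> U (fun x => Rabs (h x - L) <= eps).

Lemma lim_unique h L L' : isLim h L -> isLim h L' -> L = L'.
Proof.
  intros H1 H2. destruct (Req_dec L L') as [|Hne]; auto. exfalso.
  set (eps := Rabs (L - L') / 3).
  assert (Hp : 0 < eps) by (unfold eps; apply Rdiv_lt_0_compat; [apply Rabs_pos_lt; lra|lra]).
  destruct (UP _ (UI _ _ (H1 eps Hp) (H2 eps Hp))) as [x [A B]].
  assert (Rabs (L - L') <= Rabs (h x - L) + Rabs (h x - L')).
  { replace (L - L') with (-(h x - L) + (h x - L')) by ring.
    eapply Rle_trans. apply Rabs_triang. rewrite Rabs_Ropp. lra. }
  unfold eps in *. pose proof (Rabs_pos_lt (L - L') ltac:(lra)). lra.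
Qed.

Lemma lim_exists h : (exists M, forall x, Rabs (h x) <= M) -> exists L, isLim h L.
Proof.
  intros [M HM].
  set (S := fun r => U (fun x => r < h x)).
  assert (HS1 : S (- M - 1)).
  { unfold S. apply (US (fun _ => True)); auto. intros x _. pose proof (HM x).
    pose proof (Rle_abs (- h x)). rewrite Rabs_Ropp in *. lra. }
  assert (HS2 : bound S).
  { exists M. intros r Hr. unfold S in Hr. destruct (Rle_dec r M) as [|Hn]; auto.
    destruct (UP _ Hr) as [x Hx]. pose proof (HM x). pose proof (Rle_abs (h x)). lra. }
  destruct (completeness S HS2 (ex_intro _ _ HS1)) as [L [Hub Hl]].
  exists L. intros eps Heps.
  assert (A1 : U (fun x => L - eps < h x)).
  { destruct (classic (U (fun x => L - eps < h x))) as [|Hn]; auto. exfalso.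
    assert (L <= L - eps); [|lra]. apply Hl. intros r Hr.
    destruct (Rle_dec r (L - eps)) as [|Hn2]; auto. exfalso. apply Hn.
    apply (US (fun x => r < h x)); auto. intros x Hx; lra. }
  assert (A2 : U (fun x => h x <= L + eps)).
  { destruct (UU (fun x => L + eps < h x)) as [Hu|Hu].
    - exfalso. assert (L + eps <= L) by (apply Hub; exact Hu). lra.
    - apply (US _ _ (fun x Hx => Rnot_lt_le _ _ Hx) Hu). }
  eapply US; [|exact (UI _ _ A1 A2)]; intros x Hx; cbv beta in Hx.
  destruct Hx. apply Rabs_le; lra.
Qed.

Definition limR (h : X -> R) : R :=
  match excluded_middle_informative (exists L, isLim h L) with
  | left H => proj1_sig (constructive_indefinite_description _ H)
  | right _ => 0
  end.

Lemma limR_eq h L : isLim h L -> limR h = L.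
Proof.
  intros H. unfold limR. destruct excluded_middle_informative as [E|E].
  - destruct (constructive_indefinite_description _ E) as [L' H']. simpl. eapply lim_unique; eauto.
  - exfalso; apply E; eauto.
Qed.

Lemma limR_spec h : (exists M, forall x, Rabs (h x) <= M) -> isLim h (limR h).
Proof.
  intros HB. destruct (lim_exists h HB) as [L HL]. rewrite (limR_eq h L HL). auto.
Qed.

Lemma isLim_ext h1 h2 L1 L2 : (forall x, h1 x = h2 x) -> L1 = L2 -> isLim h1 L1 -> isLim h2 L2.
Proof.
  intros E <- H eps Heps. eapply US; [|exact (H eps Heps)]; intros x Hx; cbv beta in Hx. rewrite <- E; auto.
Qed.

Lemma isLim_const p : isLim (fun _ => p) p.
Proof. intros eps Heps. apply (US (fun _ => True)); auto. intros. rewrite Rminus_diag, Rabs_R0; lra. Qed.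

Lemma isLim_lin2 h1 h2 L1 L2 p q : isLim h1 L1 -> isLim h2 L2 ->
  isLim (fun x => p * h1 x + q * h2 x) (p * L1 + q * L2).
Proof.
  intros H1 H2 eps Heps.
  set (d := eps / (Rabs p + Rabs q + 1)).
  pose proof (Rabs_pos p). pose proof (Rabs_pos q).
  assert (Hd : 0 < d) by (unfold d; apply Rdiv_lt_0_compat; lra).
  eapply US; [|exact (UI _ _ (H1 d Hd) (H2 d Hd))]; intros x Hx; cbv beta in Hx.
  destruct Hx as [A B].
  replace (p * h1 x + q * h2 x - (p * L1 + q * L2)) with (p * (h1 x - L1) + q * (h2 x - L2)) by ring.
  eapply Rle_trans. apply Rabs_triang. rewrite !Rabs_mult.
  assert (E : d * (Rabs p + Rabs q + 1) = eps) by (unfold d; field; lra).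
  pose proof (Rabs_pos (h1 x - L1)). pose proof (Rabs_pos (h2 x - L2)).
  nra.
Qed.

Lemma isLim_mul h1 h2 L1 L2 M : (forall x, Rabs (h1 x) <= M) -> isLim h1 L1 -> isLim h2 L2 ->
  isLim (fun x => h1 x * h2 x) (L1 * L2).
Proof.
  intros HM H1 H2 eps Heps.
  set (d := eps / (Rabs M + Rabs L2 + 1)).
  pose proof (Rabs_pos M). pose proof (Rabs_pos L2).
  assert (Hd : 0 < d) by (unfold d; apply Rdiv_lt_0_compat; lra).
  eapply US; [|exact (UI _ _ (H1 d Hd) (H2 d Hd))]; intros x Hx; cbv beta in Hx.
  destruct Hx as [A B].
  replace (h1 x * h2 x - L1 * L2) with (h1 x * (h2 x - L2) + L2 * (h1 x - L1)) by ring.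
  eapply Rle_trans. apply Rabs_triang. rewrite !Rabs_mult.
  assert (E : d * (Rabs M + Rabs L2 + 1) = eps) by (unfold d; field; lra).
  pose proof (Rabs_pos (h1 x - L1)). pose proof (Rabs_pos (h2 x - L2)).
  pose proof (HM x). pose proof (Rle_abs M). pose proof (Rabs_pos (h1 x)).
  nra.
Qed.

Definition gamU (g : X -> Cx) : Cx := (limR (fun x => fst (g x)), limR (fun x => snd (g x))).

Definition isLimC (g : X -> Cx) (z : Cx) := isLim (fun x => fst (g x)) (fst z) /\ isLim (fun x => snd (g x)) (snd z).

Lemma gamU_eq (g : X -> Cx) z : isLimC g z -> gamU g = z.
Proof.
  intros [H1 H2]. unfold gamU. rewrite (limR_eq _ _ H1), (limR_eq _ _ H2). destruct z; reflexivity.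
Qed.

Lemma bounded_fst (g : X -> Cx) : bounded g -> exists M, forall x, Rabs (fst (g x)) <= M.
Proof. intros [M HM]. exists M. intro x. eapply Rle_trans; [apply Cmod_fst|apply HM]. Qed.
Lemma bounded_snd (g : X -> Cx) : bounded g -> exists M, forall x, Rabs (snd (g x)) <= M.
Proof. intros [M HM]. exists M. intro x. eapply Rle_trans; [apply Cmod_snd|apply HM]. Qed.

Lemma gamU_spec (g : X -> Cx) : bounded g -> isLimC g (gamU g).
Proof.
  intros Hb. split; apply limR_spec. apply bounded_fst; auto. apply bounded_snd; auto.
Qed.

Lemma gamU_character (e : nat -> X) b c : character e b c gamU.
Proof.
  split; [|split; [|split]].
  - intros f g Hf Hg. apply Aplus_bounded in Hf, Hg.
    destruct (gamU_spec f Hf) as [F1 F2]. destruct (gamU_spec g Hg) as [G1 G2].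
    apply gamU_eq. split.
    + eapply isLim_ext; [| |apply (isLim_lin2 _ _ _ _ 1 1 F1 G1)].
      intro x; simpl; ring. simpl; ring.
    + eapply isLim_ext; [| |apply (isLim_lin2 _ _ _ _ 1 1 F2 G2)].
      intro x; simpl; ring. simpl; ring.
  - intros a f Hf. apply Aplus_bounded in Hf.
    destruct (gamU_spec f Hf) as [F1 F2].
    apply gamU_eq. split.
    + eapply isLim_ext; [| |apply (isLim_lin2 _ _ _ _ (fst a) (- snd a) F1 F2)].
      intro x; simpl; ring. simpl; ring.
    + eapply isLim_ext; [| |apply (isLim_lin2 _ _ _ _ (fst a) (snd a) F2 F1)].
      intro x; simpl; ring. simpl; ring.
  - intros f g Hf Hg. apply Aplus_bounded in Hf, Hg.
    destruct (gamU_spec f Hf) as [F1 F2]. destruct (gamU_spec g Hg) as [G1 G2].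
    destruct (bounded_fst f Hf) as [M1 HM1]. destruct (bounded_snd f Hf) as [M2 HM2].
    pose proof (isLim_mul _ _ _ _ _ HM1 F1 G1) as P11.
    pose proof (isLim_mul _ _ _ _ _ HM2 F2 G2) as P22.
    pose proof (isLim_mul _ _ _ _ _ HM1 F1 G2) as P12.
    pose proof (isLim_mul _ _ _ _ _ HM2 F2 G1) as P21.
    apply gamU_eq. split.
    + eapply isLim_ext; [| |apply (isLim_lin2 _ _ _ _ 1 (-1) P11 P22)].
      intro x; simpl; ring. simpl; ring.
    + eapply isLim_ext; [| |apply (isLim_lin2 _ _ _ _ 1 1 P12 P21)].
      intro x; simpl; ring. simpl; ring.
  - exists (fun _ => CC1). split. apply Aplus_one.
    rewrite (gamU_eq _ CC1). unfold CC1, CC0. intro E; injection E; lra.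
    split; apply isLim_const.
Qed.

End UL.

Lemma sum_delta_eq (a : R) k N :
  sum_f_R0 (fun n => if Nat.eq_dec n k then a else 0) N = if le_dec k N then a else 0.
Proof.
  induction N; cbn [sum_f_R0].
  - destruct (Nat.eq_dec 0 k), (le_dec k 0); try lia; reflexivity.
  - rewrite IHN. destruct (Nat.eq_dec (S N) k), (le_dec k N), (le_dec k (S N)); try lia; ring.
Qed.

Lemma sum_delta_le (a : R) k N :
  sum_f_R0 (fun n => if Nat.eq_dec n k then a else 0) N <= Rmax 0 a.
Proof.
  rewrite sum_delta_eq. destruct le_dec. apply Rmax_r. apply Rmax_l.
Qed.

Lemma Qfinite_ind {X : Type} (e : nat -> X) b c x0 k :
  enumeration e -> weighted_graph e b c -> e k = x0 ->
  Qfinite e b c (fun x => if excluded_middle_informative (x = x0) then CC1 else CC0).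
Proof.
  intros [Hinj Hsurj] (Hb0 & Hsym & _ & Hsum & Hc0) Hk.
  destruct (Hsum x0) as [l Hl].
  set (ind := fun x => if excluded_middle_informative (x = x0) then CC1 else CC0).
  assert (Hind : forall n, ind (e n) = if Nat.eq_dec n k then CC1 else CC0).
  { intro n. unfold ind. destruct excluded_middle_informative as [E|E], (Nat.eq_dec n k) as [E'|E'];
      auto; exfalso.
    - apply E'. apply Hinj. congruence.
    - apply E. subst; auto. }
  set (dk := fun n : nat => if Nat.eq_dec n k then 1 else 0).
  assert (HT : forall n m, b (e n) (e m) * Cmod (Csub (ind (e n)) (ind (e m))) ^ 2 <=
                           b (e n) (e m) * dk n + b (e n) (e m) * dk m).
  { intros n m. rewrite !Hind, Cmod_pow2. pose proof (Hb0 (e n) (e m)). unfold dk.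
    destruct (Nat.eq_dec n k), (Nat.eq_dec m k); unfold Csub, CC1, CC0; simpl; nra. }
  set (S := fun n N => sum_f_R0 (fun m => b (e n) (e m)) N).
  assert (HSk : forall N, S k N <= l).
  { intro N. unfold S. rewrite Hk. apply partial_le_lim; auto. }
  assert (HS0 : forall n N, 0 <= S n N).
  { intros. unfold S. apply cond_pos_sum. intro; auto. }
  assert (Hin : forall n N, sum_f_R0 (fun m => b (e n) (e m) * Cmod (Csub (ind (e n)) (ind (e m))) ^ 2) N
                            <= dk n * S n N + b x0 (e n)).
  { intros n N. eapply Rle_trans. apply sum_Rle. intros m _. apply HT.
    rewrite sum_plus.
    assert (E1 : sum_f_R0 (fun m => b (e n) (e m) * dk n) N = dk n * S n N).
    { unfold S. rewrite scal_sum. apply sum_eq. intros; ring. }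
    assert (E2 : sum_f_R0 (fun m => b (e n) (e m) * dk m) N <= b x0 (e n)).
    { rewrite (sum_eq _ (fun m => if Nat.eq_dec m k then b (e n) x0 else 0)).
      - eapply Rle_trans. apply sum_delta_le. rewrite Hsym. apply Rmax_lub; auto. right; reflexivity.
      - intros m _. unfold dk. destruct (Nat.eq_dec m k); [subst; ring|ring]. }
    lra. }
  exists (l + c x0). intro N.
  assert (A1 : sum_f_R0 (fun n => sum_f_R0 (fun m => b (e n) (e m) * Cmod (Csub (ind (e n)) (ind (e m))) ^ 2) N) N
               <= l + l).
  { eapply Rle_trans. apply sum_Rle. intros n _. apply Hin.
    rewrite sum_plus. apply Rplus_le_compat.
    - rewrite (sum_eq _ (fun n => if Nat.eq_dec n k then S k N else 0)).
      + eapply Rle_trans. apply sum_delta_le. apply Rmax_lub; auto. apply Rle_trans with (S k N); auto.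
      + intros n _. unfold dk. destruct (Nat.eq_dec n k); [subst; ring|ring].
    - apply partial_le_lim; auto. }
  assert (A2 : sum_f_R0 (fun n => c (e n) * Cmod (ind (e n)) ^ 2) N <= c x0).
  { rewrite (sum_eq _ (fun n => if Nat.eq_dec n k then c x0 else 0)).
    - eapply Rle_trans. apply sum_delta_le. apply Rmax_lub; auto. right; reflexivity.
    - intros n _. rewrite Hind, Cmod_pow2. destruct (Nat.eq_dec n k); [subst|]; unfold CC1, CC0; simpl; ring. }
  fold ind. lra.
Qed.

Module UF.
Import ssreflect boolp classical_sets filter.
Lemma my_ultra (T : Type) (F : (T -> Prop) -> Prop) :
  F (fun _ => True) ->
  (forall A B, F A -> F B -> F (fun x => A x /\ B x)) ->
  (forall A B : T -> Prop, (forall x, A x -> B x) -> F A -> F B) ->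
  (forall A, F A -> exists x, A x) ->
  exists U : (T -> Prop) -> Prop, (forall A, F A -> U A) /\
    (forall A B, U A -> U B -> U (fun x => A x /\ B x)) /\
    (forall A B : T -> Prop, (forall x, A x -> B x) -> U A -> U B) /\
    (forall A, U A -> exists x, A x) /\
    (forall A, U A \/ U (fun x => ~ A x)).
Proof.
move=> HT HI HS Hex.
have FF : ProperFilter F.
  apply: Build_ProperFilter_ex; first exact: Hex.
  split.
  - exact: HT.
  - move=> A B FA FB; exact: (HI A B FA FB).
  - move=> A B sAB; exact: (HS A B sAB).
have [G [GU sFG]] := ultraFilterLemma FF.
exists G; split => //; split.
  move=> A B GA GB; exact: (@filterI _ _ _ A B GA GB).
split.
  move=> A B sAB; exact: (@filterS _ _ _ A B sAB).
split.
  move=> A GA; exact: (@filter_ex _ _ _ A GA).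
move=> A; exact: (in_ultra_setVsetC A GU).
Qed.
End UF.

Lemma finite_max (g : nat -> R) m N : (forall n, g n < m) ->
  exists m', m' < m /\ forall n, (n < N)%nat -> g n <= m'.
Proof.
  intros H. induction N.
  - exists (m - 1). split. lra. intros; lia.
  - destruct IHN as [m' [Hm' Hle]]. exists (Rmax m' (g N)). split.
    + apply Rmax_lub_lt; auto.
    + intros n Hn. destruct (Nat.eq_dec n N) as [->|Hne].
      * apply Rmax_r.
      * eapply Rle_trans; [apply Hle; lia|apply Rmax_l].
Qed.

Theorem mainTheorem12 (X : Type) (e : nat -> X) (He : enumeration e)
  (b : X -> X -> R) (c : X -> R)
  (Hgraph : weighted_graph e b c) (Hconn : connected b)
  (Hcc : canonically_compactifiable e b c)
  (f : X -> Cx) (HfA : in_A e b c f) (Hharm : forall x, harmonic_at e b c f x) :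
  exists m : R,
    is_lub (fun r => exists x, r = Cmod (f x)) m /\
    is_lub (fun r => exists gam, in_boundary e b c gam /\ r = Cmod (gam f)) m.
Proof.
  pose proof He as [Hinj Hsurj].
  assert (Hbd : bounded f) by (apply HfA).
  destruct (completeness (fun r => exists x, r = Cmod (f x))) as [m Hm].
  { destruct Hbd as [M HM]. exists M. intros r [x ->]. auto. }
  { exists (Cmod (f (e 0%nat))). eauto. }
  exists m. split; auto.
  destruct Hm as [Hub Hleast].
  assert (Hle : forall x, Cmod (f x) <= m) by (intro x; apply Hub; eauto).
  (* maximum principle: values near m occur infinitely often *)
  assert (Hio : forall eps, 0 < eps -> forall N, exists n, (N <= n)%nat /\ m - eps < Cmod (f (e n))).
  { intros eps Heps N. apply NNPP. intro Hn.
    assert (Hall : forall n, (N <= n)%nat -> Cmod (f (e n)) <= m - eps).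
    { intros n Hn'. destruct (Rle_dec (Cmod (f (e n))) (m - eps)) as [|Hx]; auto.
      exfalso. apply Hn. exists n. split; auto. lra. }
    destruct (classic (exists x0, Cmod (f x0) = m)) as [[x0 Hx0]|Hnone].
    - assert (Hc : forall x, f x = f x0).
      { apply (const_conn e b c f x0 He Hgraph Hconn Hharm). intro z. rewrite Hx0. auto. }
      pose proof (Hall N (le_n N)). rewrite Hc in H. lra.
    - assert (Hlt : forall n, Cmod (f (e n)) < m).
      { intro n. destruct (Rle_lt_or_eq_dec _ _ (Hle (e n))) as [|Heq]; auto.
        exfalso; apply Hnone; eauto. }
      destruct (finite_max (fun n => Cmod (f (e n))) m N Hlt) as [m' [Hm' Hfm]].
      assert (m <= Rmax m' (m - eps)); [|pose proof (Rmax_lub_lt m' (m - eps) m Hm' ltac:(lra)); lra].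
      apply Hleast. intros r [x ->]. destruct (Hsurj x) as [n <-].
      destruct (lt_dec n N).
      + eapply Rle_trans; [apply Hfm; auto|apply Rmax_l].
      + eapply Rle_trans; [apply Hall; lia|apply Rmax_r]. }
  split.
  - intros r [gam [[Hch _] ->]]. apply (char_bound e b c gam f m Hch (Aplus_A e b c f HfA) Hle).
  - intros u Hu. apply Rnot_lt_le. intro Hlt.
    set (eps := (m - u) / 2).
    assert (Heps : 0 < eps) by (unfold eps; lra).
    set (F := fun A : X -> Prop => exists N, forall n, (N <= n)%nat -> m - eps < Cmod (f (e n)) -> A (e n)).
    destruct (UF.my_ultra X F) as (U & HFU & UI & US & UP & UU).
    + exists 0%nat. auto.
    + intros A B [N1 H1] [N2 H2]. exists (max N1 N2). intros n Hn Hv. split; [apply H1|apply H2]; auto; lia.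
    + intros A B HAB [N H]. exists N. intros. apply HAB; auto.
    + intros A [N H]. destruct (Hio eps Heps N) as [n [Hn Hv]]. exists (e n). auto.
    + assert (UT : U (fun _ => True)) by (apply HFU; exists 0%nat; auto).
      set (gam := gamU U).
      assert (Hch : character e b c gam) by (apply gamU_character; auto).
      assert (Hnpe : ~ point_evaluation e b c gam).
      { intros [x0 Hx0]. destruct (Hsurj x0) as [k Hk].
        set (ind := fun x => if excluded_middle_informative (x = x0) then CC1 else CC0).
        assert (HiA : in_A e b c ind).
        { split.
          - exists 1. intro x. unfold ind. destruct excluded_middle_informative.
            rewrite Cmod_C1; lra. rewrite Cmod_C0; lra.
          - intros d Hd. exists ind. split. apply (Qfinite_ind e b c x0 k He Hgraph Hk).
            intro x. replace (Csub (ind x) (ind x)) with CC0.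
            rewrite Cmod_C0; lra. unfold Csub, CC0. f_equal; ring. }
        pose proof (Hx0 ind (Aplus_A e b c ind HiA)) as E.
        assert (Un : U (fun x => x <> x0)).
        { apply HFU. exists (S k). intros n Hn _ Heq. subst x0. apply Hinj in Heq. lia. }
        unfold gam in E. rewrite (gamU_eq U UI UP ind CC0) in E.
        - unfold ind in E. destruct excluded_middle_informative as [_|Hn]; [|apply Hn; auto].
          unfold CC0, CC1 in E. injection E. lra.
        - assert (Hz : forall x, x <> x0 -> ind x = CC0).
          { intros x Hx. unfold ind. destruct excluded_middle_informative; [contradiction|reflexivity]. }
          split; intros d Hd.
          + apply (US (fun x => x <> x0)); [|exact Un]. intros x Hx. rewrite (Hz x Hx).
            unfold CC0; simpl. rewrite Rminus_diag, Rabs_R0; lra.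
          + apply (US (fun x => x <> x0)); [|exact Un]. intros x Hx. rewrite (Hz x Hx).
            unfold CC0; simpl. rewrite Rminus_diag, Rabs_R0; lra. }
      assert (HB : Cmod (gam f) <= u).
      { apply Hu. exists gam. split; auto. split; auto. }
      destruct (gamU_spec U UT UI US UP UU f Hbd) as [L1 L2].
      set (d := (m - u) / 8).
      assert (Hd : 0 < d) by (unfold d; lra).
      assert (US0 : U (fun x => m - eps < Cmod (f x))).
      { apply HFU. exists 0%nat. auto. }
      destruct (UP _ (UI _ _ US0 (UI _ _ (L1 d Hd) (L2 d Hd)))) as [x [Hx1 [Hx2 Hx3]]].
      pose proof (Cmod_le_sub (f x) (gam f)) as T.
      pose proof (Cmod_le_parts (Csub (f x) (gam f))) as T2.
      change (fst (Csub (f x) (gam f))) with (fst (f x) - fst (gam f)) in T2.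
      change (snd (Csub (f x) (gam f))) with (snd (f x) - snd (gam f)) in T2.
      fold gam in Hx2, Hx3.
      cbv beta in Hx1, Hx2, Hx3. unfold eps, d in *. lra.
Qed.
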